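(* Let $\beta,\gamma>0$, $\tilde S$, $\tilde R$ and $N>0$ be real numbers satisfying $\tilde R\ge 0$ and $N>\tilde S e^{(\beta/\gamma)\tilde R}+\tilde R$. Then the transcendental equation \[ x=N-\tilde S e^{(\beta/\gamma)\tilde R}e^{-(\beta/\gamma)x} \] has a unique solution $x=\alpha$ such that $\tilde R<\alpha<N$.
   Context: In the paper $N=\tilde S+\tilde E+\tilde I+\tilde R$ with $\tilde S,\tilde E,\tilde I,\tilde R$ the initial values of an SEIR model, and the standing assumptions $\tilde I>0$, $\tilde E>(\gamma/\delta)\tilde I$, $\tilde S>\delta\tilde E/(\beta\tilde I)$ (for a constant $\delta>0$) are in force; in particular $\tilde S>0$. *)

(* Defs.v *)
From Stdlib Require Import Reals.

(* Main.v *)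
Require Import Defs.
From Stdlib Require Import Reals Lra Psatz.
Open Scope R_scope.

Lemma exp_tan (x y : R) : exp x * (1 + (y - x)) <= exp y.
Proof.
  replace (exp y) with (exp x * exp (y - x)) by (rewrite <- exp_plus; f_equal; ring).
  apply Rmult_le_compat_l; [left; apply exp_pos | apply exp_ineq1_le].
Qed.

Theorem lemma6 (beta gamma St Rt N : R)
  (hbeta : 0 < beta) (hgamma : 0 < gamma) (hS : 0 < St) (hN : 0 < N)
  (hR : 0 <= Rt) (hNbig : N > St * exp ((beta / gamma) * Rt) + Rt) :
  exists! alpha : R,
    Rt < alpha < N /\
    alpha = N - St * exp ((beta / gamma) * Rt) * exp (- (beta / gamma) * alpha).
Proof.
  set (k := beta / gamma).
  assert (hk : 0 < k) by (unfold k; apply Rdiv_lt_0_compat; lra).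
  set (C := St * exp (k * Rt)).
  assert (hE1 : 1 <= exp (k * Rt)).
  { pose proof (exp_ineq1_le (k * Rt)). nra. }
  assert (hCR : C * exp (- k * Rt) = St).
  { unfold C. rewrite Rmult_assoc, <- exp_plus.
    replace (k * Rt + - k * Rt) with 0 by ring. rewrite exp_0. ring. }
  assert (hCS : St <= C) by (unfold C; nra).
  assert (hC : 0 < C) by lra.
  assert (hNC : N > C + Rt) by (unfold C, k; lra).
  set (f := fun x => x - N + C * exp (- k * x)).
  assert (hf : continuity f).
  { unfold f. intro x.
apply continuity_pt_plus.
apply continuity_pt_minus. apply derivable_continuous_pt, derivable_pt_id. apply continuity_pt_const; intros ? ?; reflexivity.
apply continuity_pt_scal with (f := fun x => exp (- k * x)).
apply (continuity_pt_comp (fun x => - k * x) exp).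
apply continuity_pt_scal with (f := id). apply derivable_continuous_pt, derivable_pt_id.
apply derivable_continuous_pt, derivable_pt_exp. }
  assert (fR : f Rt < 0) by (unfold f; cbv beta; lra).
  assert (fN : 0 < f N).
  { unfold f; cbv beta. pose proof (exp_pos (- k * N)). nra. }
  assert (hlt : Rt < N) by lra.
  destruct (IVT f Rt N hf hlt fR fN) as [a [[h1 h2] h3]].
  exists a. unfold f in h3; cbv beta in h3.
  assert (Rt <> a) by (intro E; rewrite <- E in h3; lra).
  assert (a <> N) by (intro E; rewrite E in h3; pose proof (exp_pos (- k * N)); nra).
  split; [split; [lra | fold k; fold C; lra] |].
  assert (key : forall a b, Rt < a < N -> a = N - C * exp (- k * a) ->
                  Rt < b < N -> b = N - C * exp (- k * b) -> a <= b -> a = b).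
  { intros x y [hx1 hx2] ex [hy1 hy2] ey hxy.
    destruct (Req_dec x y) as [|hne]; [assumption|].
    exfalso.
    pose proof (exp_tan (- k * x) (- k * Rt)) as t1.
    pose proof (exp_tan (- k * x) (- k * y)) as t2.
    assert (A1 : C * (exp (- k * x) * (1 + (- k * Rt - - k * x))) <= St) by (rewrite <- hCR; apply Rmult_le_compat_l; lra).
    assert (A2 : C * (exp (- k * x) * (1 + (- k * y - - k * x))) <= C * exp (- k * y)) by (apply Rmult_le_compat_l; lra).
    assert (Ex : C * exp (- k * x) = N - x) by lra.
    assert (Ey : C * exp (- k * y) = N - y) by lra.
    rewrite <- Rmult_assoc, Ex in A1, A2. rewrite Ey in A2.
    assert (1 > (N - x) * k) by nra.
    assert (1 <= (N - x) * k) by nra.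
    lra. }
  intros b [hb eb]. fold k in eb |- *. fold C in eb.
  destruct (Rle_lt_dec a b).
  - apply key; try lra.
  - symmetry; apply key; lra.
Qed.
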